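(* Let $\mathcal{G}$ be an $N$-player game with finite action spaces $\mathcal{A}^1,\dots,\mathcal{A}^N$ and payoffs $u^i$; let $\varepsilon\ge0$, $s\ge1$, and metrics $d^{-i}$ on $\mathcal{A}^{-i}$ define optimal transport ambiguity sets. For a profile of mixed strategies $(\bar p^1,\dots,\bar p^N)$, the following are equivalent: (1) $(\bar p^1,\dots,\bar p^N)$ is a strategically robust equilibrium of $\mathcal{G}$ with robustness level $\varepsilon$; (2) for every $i\in\{1,\dots,N\}$ there exist $\lambda^i\in\mathbb{R}$, $\xi^i(a^{-i})\in\mathbb{R}$ ($a^{-i}\in\mathcal{A}^{-i}$), $\tau^i\in\mathbb{R}$, $\omega^i(a^i)\in\mathbb{R}$ ($a^i\in\mathcal{A}^i$), $\kappa^i\in\mathbb{R}$, and $\eta^i(a^{-i},\hat a^{-i})\in\mathbb{R}$ ($a^{-i},\hat a^{-i}\in\mathcal{A}^{-i}$) such that $$\omega^i(a^i)+\kappa^i+\sum_{a^{-i}\in\mathcal{A}^{-i}}\sum_{\hat a^{-i}\in\mathcal{A}^{-i}}\eta^i(a^{-i},\hat a^{-i})\,u^i(a^i,\hat a^{-i})=0\quad\forall a^i\in\mathcal{A}^i,$$ $$-\varepsilon^s+\tau^i+\sum_{a^{-i}}\sum_{\hat a^{-i}}\eta^i(a^{-i},\hat a^{-i})\,d^{-i}(a^{-i},\hat a^{-i})^s=0,$$ $$\prod_{j\ne i}\bar p^j(a^j)-\sum_{\hat a^{-i}\in\mathcal{A}^{-i}}\eta^i(a^{-i},\hat a^{-i})=0\quad\forall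 a^{-i}=(a^j)_{j\ne i}\in\mathcal{A}^{-i},$$ and the complementarity conditions $$0\le\tau^i\perp\lambda^i\ge0,\qquad 0\le\omega^i(a^i)\perp\bar p^i(a^i)\ge0\quad\forall a^i\in\mathcal{A}^i,$$ $$0\le\eta^i(a^{-i},\hat a^{-i})\perp\Big(-\xi^i(a^{-i})+\sum_{a^i\in\mathcal{A}^i}u^i(a^i,\hat a^{-i})\bar p^i(a^i)+\lambda^i d^{-i}(a^{-i},\hat a^{-i})^s\Big)\ge0\quad\forall a^{-i},\hat a^{-i}\in\mathcal{A}^{-i}.$$
   Context: $\mathcal{A}^{-i}:=\prod_{j\ne i}\mathcal{A}^j$. Mixed strategies $\bar p^i$ are probability vectors on $\mathcal{A}^i$; $\sigma_{p^{-i}}$ is the product distribution of $(p^j)_{j\ne i}$ on $\mathcal{A}^{-i}$. For a distribution $q$ on $\mathcal{A}^{-i}$, $U^i(p^i,q)=\sum_{a^i,a^{-i}}p^i(a^i)q(a^{-i})u^i(a^i,a^{-i})$. Ambiguity set: $\mathcal{S}^i_\varepsilon(p^{-i})=\{q:W_s(\sigma_{p^{-i}},q)\le\varepsilon\}$ with $W_s(\mu,\nu)=\left(\min_{\gamma\in\Gamma(\mu,\nu)}\sum_{x,y}d^{-i}(x,y)^s\gamma(x,y)\right)^{1/s}$ over couplings $\Gamma(\mu,\nu)$. A profile $(\bar p^1,\dots,\bar p^N)$ is a strategically robust equilibrium with robustness level $\varepsilon$ if for every $i$, $\bar p^i\in\arg\max_{p^i}\min_{q\in\mathcal{S}^i_\varepsilon(\bar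 p^{-i})}U^i(p^i,q)$. The notation $0\le x\perp y\ge0$ means $x\ge0$, $y\ge0$ and $xy=0$. *)

(* Defs.v *)
From HB Require Import structures.
From mathcomp Require Import all_boot all_order all_algebra.
From mathcomp Require Import all_classical all_reals all_analysis.
Set Implicit Arguments. Unset Strict Implicit. Unset Printing Implicit Defensive.
Import Order.TTheory GRing.Theory Num.Theory.
Local Open Scope classical_set_scope.
Local Open Scope ring_scope.

Section Game.
Context {R : realType}.

Definition others (N : nat) (i : 'I_N) := {j : 'I_N | j != i}.

Definition profm (N : nat) (A : 'I_N -> finType) (i : 'I_N) : finType :=
  {dffun forall j : others i, A (sval j)}.

Definition is_prob (T : finType) (p : T -> R) : Prop :=
  (forall x, 0 <= p x) /\ \sum_(x : T) p x = 1.

Definition is_metric (T : finType) (d : T -> T -> R) : Prop :=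
  [/\ forall x y, 0 <= d x y,
      forall x y, d x y = 0 <-> x = y,
      forall x y, d x y = d y x
    & forall x y z, d x z <= d x y + d y z].

Definition prod_dist (N : nat) (A : 'I_N -> finType) (p : forall j, A j -> R)
  (i : 'I_N) (a : profm A i) : R :=
  \prod_(j : others i) p (sval j) (a j).

Definition Upay (S T : finType) (u : S -> T -> R) (p : S -> R) (q : T -> R) : R :=
  \sum_(a : S) \sum_(b : T) p a * q b * u a b.

Definition coupling (T : finType) (mu nu : T -> R) (g : T -> T -> R) : Prop :=
  [/\ forall x y, 0 <= g x y,
      forall x, \sum_(y : T) g x y = mu x
    & forall y, \sum_(x : T) g x y = nu y].

Definition Wass (T : finType) (d : T -> T -> R) (s : R) (mu nu : T -> R) : R :=
  (inf [set c | exists g, coupling mu nu g /\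
                   c = \sum_(x : T) \sum_(y : T) (d x y) `^ s * g x y]) `^ (s^-1).

Definition ambiguity (T : finType) (d : T -> T -> R) (s eps : R) (mu : T -> R)
  : set (T -> R) :=
  [set q | is_prob q /\ Wass d s mu q <= eps].

Definition robust_value (S T : finType) (u : S -> T -> R) (d : T -> T -> R)
  (s eps : R) (p : S -> R) (mu : T -> R) : R :=
  inf [set Upay u p q | q in ambiguity d s eps mu].

Definition SRE (N : nat) (A : 'I_N -> finType)
  (u : forall i, A i -> profm A i -> R) (d : forall i, profm A i -> profm A i -> R)
  (s eps : R) (pbar : forall i, A i -> R) : Prop :=
  forall i : 'I_N, is_prob (pbar i) /\
    forall p : A i -> R, is_prob p ->
      robust_value (u i) (d i) s eps p (@prod_dist N A pbar i)
      <= robust_value (u i) (d i) s eps (pbar i) (@prod_dist N A pbar i).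

Definition perp (x y : R) : Prop := [/\ 0 <= x, 0 <= y & x * y = 0].

End Game.
Arguments prod_dist {R N A} p i a.

(* Main.v *)
Require Import Defs.
From HB Require Import structures.
From mathcomp Require Import all_boot all_order all_algebra.
From mathcomp Require Import all_classical all_reals all_analysis.
From mathcomp Require Import ring lra.
Import Order.TTheory GRing.Theory Num.Theory.
Local Open Scope ring_scope.

Lemma sum_prod_dep (R : comNzRingType) (I : finType) (T_ : I -> finType)
  (F : forall i, T_ i -> R) :
  \sum_(t : {dffun forall i : I, T_ i}) \prod_(i : I) F i (t i) =
  \prod_(i : I) \sum_(x : T_ i) F i x.
Proof.
pose P_ := fun i => [ffun x : T_ i => F i x].
rewrite (reindex (@dffun_of_fprod I T_)); last exact/onW_bij/dffun_of_fprod_bij.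
transitivity (\sum_(t : fprod T_) \prod_(i in I) P_ i (t i)).
  by apply: eq_bigr => t _; apply: eq_bigr => i _; rewrite /P_ !ffunE.
rewrite big_fprod /= -(bigA_distr_big_dep (tagged_with T_) (fun i j => untag 0 (P_ i) j)).
apply: eq_bigr => i _; rewrite (big_tag (fun i x => F i x) i).
by apply: eq_bigr => j _; rewrite /P_ /untag; case: eqP => // e; rewrite ffunE.
Qed.

Section Farkas.
Variable R : realType.

Lemma sum_ind (K : finType) (p : K) (F : K -> R) :
  \sum_k (k == p)%:R * F k = F p.
Proof.
rewrite (bigD1 p) //= eqxx mul1r big1 ?addr0 // => k /negbTE ->.
by rewrite mul0r.
Qed.

Lemma FM n : forall (K : finType) (a : K -> nat -> R) (b : K -> R),
  ~ (exists x : nat -> R, forall k, \sum_(j < n) a k j * x j <= b k) ->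
  exists w : K -> R, (forall k, 0 <= w k) /\
    (forall j, (j < n)%N -> \sum_k w k * a k j = 0) /\ \sum_k w k * b k < 0.
Proof.
elim: n => [|n IH] K a b Hinf.
  have [k Hk] : exists k, b k < 0.
    apply: contra_notP Hinf => H; exists (fun _ => 0) => k.
    rewrite big_ord0 leNgt; apply/negP => Hk; apply: H; by exists k.
  exists (fun k' => (k' == k)%:R); split; first by move=> k'; rewrite ler0n.
  by split=> // ; rewrite sum_ind.
pose c (k' : K + (K * K)) (k0 : K) : R :=
  match k' with
  | inl k => if (a k n == 0) && (k0 == k) then 1 else 0
  | inr (p, q) => if (0 < a p n) && (a q n < 0)
      then (k0 == p)%:R * (- a q n) + (k0 == q)%:R * a p n else 0
  end.
have c_ge0 k' k0 : 0 <= c k' k0.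
  case: k' => [k|[p q]] /=; first by case: ifP.
  case: ifP => // /andP[Hp Hq]; apply: addr_ge0; apply: mulr_ge0;
    rewrite ?ler0n ?oppr_ge0 ?ltW //.
pose a' k' j := \sum_k c k' k * a k j.
pose b' k' := \sum_k c k' k * b k.
have a'n k' : a' k' n = 0.
  rewrite /a'; case: k' => [k|[p q]] /=.
    rewrite (bigD1 k) //= eqxx andbT big1 ?addr0.
      by case: eqP => [->|]; rewrite ?mulr0 ?mul0r.
    by move=> k0 /negbTE ->; rewrite andbF mul0r.
  case: ((0 < a p n) && (a q n < 0)); last by rewrite big1 // => k0 _; rewrite mul0r.
  under eq_bigr => k0 _ do rewrite mulrDl -!mulrA.
  by rewrite big_split /= !sum_ind mulNr mulrC addNr.
have [[x' Hx']|Hinf'] := pselect (exists x : nat -> R, forall k, \sum_(j < n) a' k j * x j <= b' k); last first.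
  have [w' [w'0 [w'a w'b]]] := IH _ a' b' Hinf'.
  exists (fun k => \sum_k' w' k' * c k' k); split.
    by move=> k; apply: sumr_ge0 => k' _; apply: mulr_ge0.
  have key (F : K -> R) : \sum_k (\sum_k' w' k' * c k' k) * F k =
      \sum_k' w' k' * \sum_k c k' k * F k.
    under eq_bigr => k _ do rewrite mulr_suml.
    rewrite exchange_big /=; apply: eq_bigr => k' _; rewrite mulr_sumr.
    by apply: eq_bigr => k _; rewrite mulrA.
  split; last by rewrite key.
  move=> j; rewrite ltnS leq_eqVlt => /orP[/eqP ->|Hj]; rewrite key.
    by rewrite big1 // => k' _; have := a'n k'; rewrite /a' => ->; rewrite mulr0.
  exact: w'a.
exfalso; apply: Hinf.
pose l k := \sum_(j < n) a k j * x' j.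
have Hl k' : \sum_k c k' k * l k <= b' k'.
  apply: le_trans (Hx' k'); rewrite le_eqVlt; apply/orP; left; apply/eqP.
  rewrite /l /a'; under eq_bigr => k _ do rewrite mulr_sumr.
  rewrite exchange_big /=; apply: eq_bigr => j _; rewrite mulr_suml.
  by apply: eq_bigr => k _; rewrite mulrA.
pose U p := (b p - l p) / a p n.
pose L q := (b q - l q) / a q n.
pose M := \big[Num.max/0]_(q | a q n < 0) L q.
pose t := \big[Num.min/M]_(p | 0 < a p n) U p.
have tU p : 0 < a p n -> t <= U p.
  by move=> Hp; rewrite /t (bigD1 p) //= ge_min lexx.
have LM q : a q n < 0 -> L q <= M.
  by move=> Hq; rewrite /M (bigD1 q) //= le_max lexx.
have LU p q : 0 < a p n -> a q n < 0 -> L q <= U p.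
  move=> Hp Hq; have := Hl (inr (p, q)); rewrite /= Hp Hq /=.
  under eq_bigr => k0 _ do rewrite mulrDl -!mulrA.
  rewrite big_split /= !sum_ind.
  rewrite /b'/= Hp Hq /=.
  under eq_bigr => k0 _ do rewrite mulrDl -!mulrA.
  rewrite big_split /= !sum_ind => H.
  have hab : 0 < a p n * - a q n by rewrite mulr_gt0 // oppr_gt0.
  have EU : b p - l p = U p * a p n by rewrite /U divfK // gt_eqF.
  have EL : b q - l q = L q * a q n by rewrite /L divfK // lt_eqF.
  have Hq' : 0 < - a q n by rewrite oppr_gt0.
  rewrite /L /U (_ : (b q - l q) / a q n = (l q - b q) / (- a q n)); last first.
    by rewrite invrN mulrN -mulNr opprB.
  rewrite ler_pdivrMr // mulrAC ler_pdivlMr // -subr_ge0.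
  have -> : (b p - l p) * - a q n - (l q - b q) * a p n =
    (- a q n * b p + a p n * b q) - (- a q n * l p + a p n * l q) by ring.
  by rewrite subr_ge0.
have Lt q : a q n < 0 -> L q <= t.
  move=> Hq; rewrite /t; elim/big_ind: _ => //; first exact: LM.
    by move=> x y Hx Hy; rewrite le_min Hx Hy.
  by move=> p Hp; apply: LU.
exists (fun j => if j == n then t else x' j) => k.
rewrite big_ord_recr /= eqxx.
rewrite (_ : \sum_(i < n) _ = l k); last first.
  by apply: eq_bigr => j _; rewrite (ltn_eqF (ltn_ord j)).
case: (ltgtP (a k n) 0) => Hk.
- have := Lt k Hk; rewrite /L ler_ndivrMr // => H.
  by rewrite addrC -[b k](subrK (l k)) lerD2r mulrC.
- have := tU k Hk; rewrite /U ler_pdivlMr // => H.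
  by rewrite addrC -[b k](subrK (l k)) lerD2r mulrC.
- have := Hl (inl k); rewrite /b' /= Hk eqxx /=.
  have E (F : K -> R) : \sum_k0 (if k0 == k then 1 else 0) * F k0 = F k.
    by rewrite -(sum_ind _ k F); apply: eq_bigr => k0 _; case: (k0 == k).
  by rewrite !E mul0r addr0.
Qed.



Lemma farkas (V K : finType) (c : K -> V -> R) (b : K -> R) :
  ~ (exists x : V -> R, forall k, \sum_v c k v * x v <= b k) ->
  exists w : K -> R, (forall k, 0 <= w k) /\
    (forall v, \sum_k w k * c k v = 0) /\ \sum_k w k * b k < 0.
Proof.
move=> Hinf.
pose a k (j : nat) := match @insub _ (fun j => j < #|V|)%N 'I_#|V| j with
  | Some o => c k (enum_val o) | None => 0 end.
have aE k (o : 'I_#|V|) : a k o = c k (enum_val o) by rewrite /a valK.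
have sE k (x : nat -> R) : \sum_(j < #|V|) a k j * x j =
    \sum_v c k v * x (enum_rank v).
  rewrite (reindex (@enum_rank V)); last first.
    by apply: onW_bij; apply: enum_rank_bij.
  by apply: eq_bigr => v _; rewrite aE enum_rankK.
have Hinf' : ~ (exists x : nat -> R, forall k, \sum_(j < #|V|) a k j * x j <= b k).
  move=> [x' Hx']; apply: Hinf; exists (fun v => x' (enum_rank v)) => k.
  by rewrite -sE.
have [w [w0 [wa wb]]] := FM _ _ _ _ Hinf'.
exists w; split=> //; split=> // v.
have := wa (enum_rank v) (ltn_ord _).
by under eq_bigr => k _ do rewrite aE enum_rankK.
Qed.

End Farkas.

Section Analytic.
Variable R : realType.
Variables (P : finType) (d : P -> P -> R) (s eps : R).
Hypotheses (eps0 : 0 <= eps) (s1 : 1 <= s) (dm : is_metric d).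

Let s0 : s != 0.
Proof. by apply/negP => /eqP s0; move: s1; rewrite s0 ler10. Qed.

Lemma powR_le1 (I : R) : 0 <= I -> I `^ s^-1 <= eps -> I <= eps `^ s.
Proof.
move=> I0 H.
have -> : I = (I `^ s^-1) `^ s by rewrite -powRrM mulVf // powRr1.
apply: ge0_ler_powR => //; first by apply: le_trans s1.
  by rewrite nnegrE powR_ge0.
Qed.

Lemma powR_le2 (I : R) : 0 <= I -> I <= eps `^ s -> I `^ s^-1 <= eps.
Proof.
move=> I0 H.
rewrite -[X in _ <= X](powRr1 eps0) -(mulfV s0) powRrM.
apply: ge0_ler_powR => //; first by rewrite invr_ge0; apply: le_trans s1.
by rewrite nnegrE powR_ge0.
Qed.

Definition costs (mu nu : P -> R) : set R := [set c : R | exists g, coupling mu nu g /\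
                   c = \sum_(x : P) \sum_(y : P) (d x y) `^ s * g x y].

Lemma costs_ge0 mu nu c : costs mu nu c -> 0 <= c.
Proof.
move=> [g [[g0 _ _] ->]]; apply: sumr_ge0 => x _; apply: sumr_ge0 => y _.
by apply: mulr_ge0; rewrite ?powR_ge0.
Qed.

Lemma costs_lb mu nu : has_lbound (costs mu nu).
Proof. by exists 0 => c /costs_ge0. Qed.

Lemma amb_of_coupling (sig : P -> R) (g : P -> P -> R) :
  is_prob sig -> (forall x y, 0 <= g x y) -> (forall x, \sum_y g x y = sig x) ->
  \sum_(x : P) \sum_(y : P) (d x y) `^ s * g x y <= eps `^ s ->
  ambiguity d s eps sig (fun y => \sum_x g x y).
Proof.
move=> [sig0 sig1] g0 gr gc; split.
  split; first by move=> y; apply: sumr_ge0.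
  by rewrite exchange_big /= -sig1; apply: eq_bigr => x _; rewrite gr.
rewrite /Wass; apply: powR_le2.
  apply: lb_le_inf; last by move=> c /costs_ge0.
  by exists (\sum_(x : P) \sum_(y : P) (d x y) `^ s * g x y); exists g.
apply: le_trans gc; apply: (ge_inf (costs_lb sig (fun y => \sum_x g x y))).
by exists g.
Qed.

End Analytic.

Local Open Scope classical_set_scope.

Section Robust.
Variable R : realType.
Variables (P S : finType) (d : P -> P -> R) (s eps : R) (u : S -> P -> R).
Hypotheses (eps0 : 0 <= eps) (s1 : 1 <= s) (dm : is_metric d).

Let s0 : s != 0.
Proof. by apply/negP => /eqP s0; move: s1; rewrite s0 ler10. Qed.

Lemma prob_le1 (T : finType) (p : T -> R) x : is_prob p -> 0 <= p x <= 1.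
Proof.
move=> [p0 p1]; rewrite p0 /= -p1 (bigD1 x) //= lerDl.
by apply: sumr_ge0.
Qed.

Lemma Upay_eq (p : S -> R) (q : P -> R) :
  Upay u p q = \sum_y q y * \sum_ai u ai y * p ai.
Proof.
rewrite /Upay exchange_big; apply: eq_bigr => y _; rewrite mulr_sumr.
by apply: eq_bigr => ai _; ring.
Qed.

Lemma amb_nonempty (sig : P -> R) : is_prob sig ->
  exists q, ambiguity d s eps sig q.
Proof.
move=> sp; have [sig0 sig1] := sp.
exists (fun y => \sum_x sig x * (x == y)%:R).
apply: amb_of_coupling => //.
- by move=> x y; rewrite mulr_ge0 ?ler0n.
- move=> x; rewrite (bigD1 x) //= eqxx mulr1 big1 ?addr0 //.
  by move=> y; rewrite eq_sym => /negbTE ->; rewrite mulr0.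
- rewrite big1; first by rewrite powR_ge0.
  move=> x _; rewrite (bigD1 x) //= eqxx mulr1 big1 ?addr0.
    by case: dm => _ dxx _ _; rewrite (proj2 (dxx x x) erefl) powR0 // mul0r.
  by move=> y; rewrite eq_sym => /negbTE ->; rewrite !mulr0.
Qed.

Lemma rv_le (sig : P -> R) (p : S -> R) q : is_prob p ->
  ambiguity d s eps sig q -> robust_value u d s eps p sig <= Upay u p q.
Proof.
move=> pp Hq; apply: ge_inf; last by exists q.
exists (- \sum_ai \sum_y `|u ai y|) => _ [q' [[q'0 q'1] _] <-].
rewrite /Upay -sumrN; apply: ler_sum => ai _; rewrite -sumrN.
apply: ler_sum => y _; apply: lerNnormlW.
have /andP[pa0 pa1] := prob_le1 _ _ ai pp.
have /andP[qy0 qy1] := prob_le1 _ _ y (conj q'0 q'1).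
rewrite normrM ger0_norm ?mulr_ge0 //; apply: ler_piMl => //.
by rewrite -[1]mulr1 ler_pM.
Qed.

Lemma rv_ge (sig : P -> R) (p : S -> R) (B : R) : is_prob sig ->
  (forall q, ambiguity d s eps sig q -> B <= Upay u p q) ->
  B <= robust_value u d s eps p sig.
Proof.
move=> sp H; apply: lb_le_inf.
  by have [q Hq] := amb_nonempty _ sp; exists (Upay u p q); exists q.
by move=> _ [q Hq <-]; apply: H.
Qed.

Lemma weak_dual (sig : P -> R) (p : S -> R) lam (xi : P -> R) :
  is_prob sig -> 0 <= lam ->
  (forall a ah, xi a - lam * (d a ah) `^ s <= \sum_ai u ai ah * p ai) ->
  forall q, ambiguity d s eps sig q ->
  \sum_a sig a * xi a - lam * eps `^ s <= Upay u p q.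
Proof.
move=> sp lam0 H q [[q0 q1] W].
have [sig0 sig1] := sp.
have cne : @costs _ _ d s sig q !=set0.
  exists (\sum_x \sum_y (d x y) `^ s * (sig x * q y)).
  exists (fun x y => sig x * q y); split => //; split.
  - by move=> x y; apply: mulr_ge0.
  - by move=> x; rewrite -mulr_sumr q1 mulr1.
  - by move=> y; rewrite -mulr_suml sig1 mul1r.
have I0 : 0 <= inf (@costs _ _ d s sig q).
  by apply: lb_le_inf => // c /costs_ge0.
have Ile : inf (@costs _ _ d s sig q) <= eps `^ s by apply: powR_le1.
apply/ler_addgt0Pr => e e0.
have l1 : 0 < lam + 1 by rewrite ltr_wpDl.
have de : 0 < e / (lam + 1) by rewrite divr_gt0.
have [c [g [[g0 gr gc] ->]] clt] := inf_adherent de (conj cne (@costs_lb _ _ d s sig q)).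
have HU : \sum_x sig x * xi x -
    lam * \sum_x \sum_y (d x y) `^ s * g x y <= Upay u p q.
  have -> : \sum_x sig x * xi x - lam * \sum_x \sum_y (d x y) `^ s * g x y
     = \sum_x \sum_y g x y * (xi x - lam * (d x y) `^ s).
    rewrite mulr_sumr -sumrB; apply: eq_bigr => x _.
    rewrite -gr mulr_suml mulr_sumr -sumrB; apply: eq_bigr => y _; ring.
  rewrite Upay_eq.
  have -> : \sum_y q y * \sum_ai u ai y * p ai =
            \sum_x \sum_y g x y * \sum_ai u ai y * p ai.
    rewrite exchange_big /=; apply: eq_bigr => y _.
    by rewrite -gc mulr_suml.
  apply: ler_sum => x _; apply: ler_sum => y _; apply: ler_wpM2l => //.
move: HU clt; set cc := \sum_x \sum_y _ => HU clt.
have H2 : lam * cc <= lam * eps `^ s + e.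
  have : lam * cc <= lam * (eps `^ s + e / (lam + 1)).
    by apply: ler_wpM2l => //; apply: ltW; apply: (lt_le_trans clt); rewrite lerD2r.
  move=> H1; apply: le_trans H1 _.
  rewrite mulrDr lerD2l.
  rewrite mulrA ler_pdivrMr // [lam * e]mulrC; apply: ler_wpM2l; [exact: ltW | by rewrite lerDl].
lra.
Qed.

End Robust.

Local Close Scope classical_set_scope.

Section FarkasF.
Variable R : realType.

Lemma sum_seq_lin (V : finType) (f : (V -> R) -> R)
  (hD : forall x y, f (fun v => x v + y v) = f x + f y)
  (hZ : forall a x, f (fun v => a * x v) = a * f x)
  (I : Type) (r : seq I) (G : I -> V -> R) :
  f (fun v => \sum_(j <- r) G j v) = \sum_(j <- r) f (G j).
Proof.
elim: r => [|j r IH].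
  have -> : (fun v => \sum_(j <- [::]) G j v) = (fun v => 0 * 0 : R).
    by apply: funext => v; rewrite big_nil mul0r.
  by rewrite (hZ 0 (fun _ => 0)) mul0r big_nil.
have -> : (fun v => \sum_(j0 <- j :: r) G j0 v) =
          (fun v => G j v + \sum_(j0 <- r) G j0 v).
  by apply: funext => v; rewrite big_cons.
by rewrite hD IH big_cons.
Qed.

Lemma farkasF (V K : finType) (f : K -> (V -> R) -> R) (b : K -> R) :
  (forall k x y, f k (fun v => x v + y v) = f k x + f k y) ->
  (forall k a x, f k (fun v => a * x v) = a * f k x) ->
  ~ (exists x : V -> R, forall k, f k x <= b k) ->
  exists w : K -> R, (forall k, 0 <= w k) /\
    (forall x, \sum_k w k * f k x = 0) /\ \sum_k w k * b k < 0.
Proof.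
move=> hD hZ Hinf.
pose c k v := f k (fun v' => (v' == v)%:R).
have fE k x : f k x = \sum_v c k v * x v.
  have Ex : x = (fun v' => \sum_v x v * (v' == v)%:R).
    apply: funext => v'; rewrite (bigD1 v') //= eqxx mulr1 big1 ?addr0 //.
    by move=> v /negbTE; rewrite eq_sym => ->; rewrite mulr0.
  rewrite {1}Ex (@sum_seq_lin _ _ (hD k) (hZ k)); apply: eq_bigr => v _.
  by rewrite (hZ k (x v) (fun v' => (v' == v)%:R)) mulrC.
have Hinf' : ~ (exists x : V -> R, forall k, \sum_v c k v * x v <= b k).
  by move=> [x Hx]; apply: Hinf; exists x => k; rewrite fE.
have [w [w0 [wc wb]]] := @farkas R _ _ _ _ Hinf'.
exists w; split=> //; split=> // x.
under eq_bigr => k _ do rewrite fE mulr_sumr.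
rewrite exchange_big /= big1 // => v _.
transitivity (x v * \sum_k w k * c k v); last by rewrite wc mulr0.
rewrite mulr_sumr; apply: eq_bigr => k _; ring.
Qed.

Lemma sum_pair (P Q : finType) (F : P * Q -> R) :
  \sum_p F p = \sum_a \sum_b F (a, b).
Proof. by rewrite pair_big; apply: eq_bigr => -[]. Qed.

Lemma sum2D (P : finType) (F G H : P -> P -> R) :
  \sum_a \sum_b (F a b + G a b) * H a b =
  \sum_a \sum_b F a b * H a b + \sum_a \sum_b G a b * H a b.
Proof.
rewrite -big_split; apply: eq_bigr => a _; rewrite -big_split.
by apply: eq_bigr => b _; rewrite mulrDl.
Qed.

Lemma sum2Z (P : finType) c (F H : P -> P -> R) :
  \sum_a \sum_b (c * F a b) * H a b = c * \sum_a \sum_b F a b * H a b.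
Proof.
rewrite mulr_sumr; apply: eq_bigr => a _; rewrite mulr_sumr.
by apply: eq_bigr => b _; rewrite mulrA.
Qed.

Lemma sumlD (P : finType) (H F G : P -> R) :
  \sum_a H a * (F a + G a) = \sum_a H a * F a + \sum_a H a * G a.
Proof. by rewrite -big_split; apply: eq_bigr => a _; rewrite mulrDr. Qed.

Lemma sumlZ (P : finType) c (H F : P -> R) :
  \sum_a H a * (c * F a) = c * \sum_a H a * F a.
Proof. by rewrite mulr_sumr; apply: eq_bigr => a _; rewrite mulrCA. Qed.

Lemma sum1Z (P : finType) c (F : P -> R) :
  \sum_a c * F a = c * \sum_a F a.
Proof. by rewrite mulr_sumr. Qed.

Lemma sum_indl (K : finType) (p : K) (F : K -> R) :
  \sum_k F k * (k == p)%:R = F p.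
Proof. by rewrite -[RHS](@sum_ind R _ p F); apply: eq_bigr => k _; rewrite mulrC. Qed.

End FarkasF.

Lemma prod_dist_prob (R : realType) (N : nat) (A : 'I_N -> finType)
  (p : forall j, A j -> R) (i : 'I_N) :
  (forall j, is_prob (p j)) -> is_prob (prod_dist p i).
Proof.
move=> pp; split.
  by move=> a; rewrite /prod_dist; apply: prodr_ge0 => j _; case: (pp (sval j)).
rewrite /prod_dist.
rewrite (@sum_prod_dep _ _ (fun j : others i => A (sval j)) (fun j : others i => p (sval j))).
by rewrite big1 // => j _; case: (pp (sval j)).
Qed.

Lemma triple (R : realType) (P S : finType) (eta : P -> P -> R) (u : S -> P -> R)
  (F : S -> R) :
  \sum_ah (\sum_a eta a ah) * (\sum_ai u ai ah * F ai) =
  \sum_ai F ai * (\sum_a \sum_ah eta a ah * u ai ah).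
Proof.
transitivity (\sum_a \sum_ah \sum_ai eta a ah * u ai ah * F ai).
  under eq_bigr => ah _ do rewrite mulr_suml.
  rewrite exchange_big /=; apply: eq_bigr => a _; apply: eq_bigr => ah _.
  by rewrite mulr_sumr; apply: eq_bigr => ai _; rewrite mulrA.
symmetry; under eq_bigr => ai _ do rewrite mulr_sumr.
rewrite exchange_big /=; apply: eq_bigr => a _.
under eq_bigr => ai _ do rewrite mulr_sumr.
rewrite exchange_big /=; apply: eq_bigr => ah _; apply: eq_bigr => ai _; ring.
Qed.

Section Main.
Variables (R : realType) (N : nat) (A : 'I_N -> finType)
  (u : forall i, A i -> profm A i -> R)
  (d : forall i, profm A i -> profm A i -> R)
  (eps s : R) (pbar : forall i, A i -> R).
Hypotheses (eps0 : 0 <= eps) (s1 : 1 <= s) (dm : forall i, is_metric (d i))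
  (pp : forall i, is_prob (pbar i)).

Lemma dir21 (i : 'I_N) :
  (exists (lam : R) (xi : profm A i -> R) (tau : R) (om : A i -> R) (kap : R)
            (eta : profm A i -> profm A i -> R),
       (forall ai : A i,
              om ai + kap + \sum_(a : profm A i) \sum_(ah : profm A i)
                             eta a ah * u i ai ah = 0) /\
           (- (eps `^ s) + tau + \sum_(a : profm A i) \sum_(ah : profm A i)
                             eta a ah * (d i a ah) `^ s = 0) /\
           (forall a : profm A i,
              prod_dist pbar i a - \sum_(ah : profm A i) eta a ah = 0) /\
           perp tau lam /\
           (forall ai : A i, perp (om ai) (pbar i ai)) /\
         (forall a ah : profm A i,
              perp (eta a ah)
                (- xi a + \sum_(ai : A i) u i ai ah * pbar i ai
                 + lam * (d i a ah) `^ s))) ->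
  is_prob (pbar i) /\
    forall p : A i -> R, is_prob p ->
      robust_value (u i) (d i) s eps p (prod_dist pbar i)
      <= robust_value (u i) (d i) s eps (pbar i) (prod_dist pbar i).
Proof.
move=> [lam [xi [tau [om [kap [eta [H1 [H2 [H3 [Hp1 [Hp2 Hp3]]]]]]]]]]].
have sp := @prod_dist_prob R N A pbar i pp.
move: H3 Hp3 sp; set sig := prod_dist pbar i => H3 Hp3 sp.
have eta0 a ah : 0 <= eta a ah by case: (Hp3 a ah).
have etar a : \sum_ah eta a ah = sig a.
  by move/eqP: (H3 a); rewrite subr_eq0 => /eqP.
have [tau0 lam0 taulam] := Hp1.
have costE : \sum_a \sum_ah (d i a ah) `^ s * eta a ah =
             \sum_a \sum_ah eta a ah * (d i a ah) `^ s.
  by apply: eq_bigr => a _; apply: eq_bigr => ah _; rewrite mulrC.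
have cost : \sum_a \sum_ah (d i a ah) `^ s * eta a ah <= eps `^ s.
  by rewrite costE; move: H2; set X := \sum_a _; lra.
have Hq : ambiguity (d i) s eps sig (fun ah => \sum_a eta a ah).
  by apply: amb_of_coupling.
have H1' ai : \sum_a \sum_ah eta a ah * u i ai ah = - om ai - kap.
  by move: (H1 ai); set X := \sum_a _; lra.
have om0 ai : 0 <= om ai by case: (Hp2 ai).
have ompb ai : om ai * pbar i ai = 0 by case: (Hp2 ai).
split; first exact: pp.
move=> p Hp.
have Hup : Upay (u i) p (fun ah => \sum_a eta a ah) <= - kap.
  rewrite Upay_eq triple; under eq_bigr => ai _ do rewrite H1'.
  have [p0 p1] := Hp.
  have -> : \sum_ai p ai * (- om ai - kap) = - (\sum_ai p ai * om ai) - kap.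
    under eq_bigr => ai _ do rewrite mulrBr mulrN.
    by rewrite sumrB sumrN -mulr_suml p1 mul1r.
  have : 0 <= \sum_ai p ai * om ai by apply: sumr_ge0 => ai _; apply: mulr_ge0.
  lra.
have Hrv : robust_value (u i) (d i) s eps p sig <=
           Upay (u i) p (fun ah => \sum_a eta a ah) by apply: rv_le.
have Hdual a ah : xi a - lam * (d i a ah) `^ s <= \sum_ai u i ai ah * pbar i ai.
  by case: (Hp3 a ah) => _ + _; rewrite -subr_ge0; set X := \sum_ai _; lra.
have Hval : \sum_a sig a * xi a - lam * eps `^ s = - kap.
  have E1 : \sum_a sig a * xi a =
      \sum_a \sum_ah eta a ah * (\sum_ai u i ai ah * pbar i ai) +
      lam * \sum_a \sum_ah eta a ah * (d i a ah) `^ s.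
    rewrite mulr_sumr -big_split; apply: eq_bigr => a _.
    rewrite -etar mulr_suml mulr_sumr -big_split; apply: eq_bigr => ah _ /=.
    case: (Hp3 a ah) => _ _ E.
    transitivity (eta a ah * (\sum_ai u i ai ah * pbar i ai + lam * (d i a ah) `^ s)
      - eta a ah * (- xi a + \sum_ai u i ai ah * pbar i ai + lam * (d i a ah) `^ s)).
      by ring.
    by rewrite E subr0; ring.
  have E2 : \sum_a \sum_ah eta a ah * (\sum_ai u i ai ah * pbar i ai) =
            \sum_ai pbar i ai * (- om ai - kap).
    rewrite -[RHS](eq_bigr _ (fun ai _ => congr1 (fun t => pbar i ai * t) (H1' ai))).
    rewrite -triple exchange_big /=; apply: eq_bigr => ah _.
    by rewrite mulr_suml.
  have E3 : \sum_ai pbar i ai * (- om ai - kap) = - kap.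
    under eq_bigr => ai _ do rewrite mulrBr mulrN (mulrC _ (om ai)) ompb oppr0 sub0r.
    by rewrite sumrN -mulr_suml (proj2 (pp i)) mul1r.
  have E4 : \sum_a \sum_ah eta a ah * (d i a ah) `^ s = eps `^ s - tau.
    by move: H2; set X := \sum_a _; lra.
  rewrite E1 E2 E3 E4 mulrBr.
  have -> : lam * tau = 0 by rewrite mulrC.
  ring.
have Hge : \sum_a sig a * xi a - lam * eps `^ s <=
           robust_value (u i) (d i) s eps (pbar i) sig.
  by apply: rv_ge => // q Hq'; apply: weak_dual.
lra.
Qed.

End Main.

Section Main2.
Variables (R : realType) (N : nat) (A : 'I_N -> finType)
  (u : forall i, A i -> profm A i -> R)
  (d : forall i, profm A i -> profm A i -> R)
  (eps s : R) (pbar : forall i, A i -> R).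
Hypotheses (eps0 : 0 <= eps) (s1 : 1 <= s) (dm : forall i, is_metric (d i))
  (pp : forall i, is_prob (pbar i)).

Lemma from_feasible (i : 'I_N)
  (x : ((profm A i + unit) + ((profm A i * profm A i) + unit))%type -> R) :
  let D a ah := (d i a ah) `^ s in
  let E := eps `^ s in
  let sig := prod_dist pbar i in
  let Vb ah := \sum_(ai : A i) u i ai ah * pbar i ai in
  (forall a ah, x (inl (inl a)) - x (inl (inr tt)) * D a ah <= Vb ah) ->
  - x (inl (inr tt)) <= 0 ->
  (forall a ah, - x (inr (inl (a, ah))) <= 0) ->
  \sum_a \sum_ah x (inr (inl (a, ah))) * D a ah <= E ->
  (forall ai, x (inr (inr tt)) + \sum_a \sum_ah x (inr (inl (a, ah))) * u i ai ah <= 0) ->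
  (forall a, \sum_ah x (inr (inl (a, ah))) <= sig a) ->
  (forall a, - \sum_ah x (inr (inl (a, ah))) <= - sig a) ->
  - x (inr (inr tt)) - \sum_a sig a * x (inl (inl a)) + x (inl (inr tt)) * E <= 0 ->
  exists (lam : R) (xi : profm A i -> R) (tau : R) (om : A i -> R) (kap : R)
            (eta : profm A i -> profm A i -> R),
       (forall ai : A i,
              om ai + kap + \sum_(a : profm A i) \sum_(ah : profm A i)
                             eta a ah * u i ai ah = 0) /\
           (- (eps `^ s) + tau + \sum_(a : profm A i) \sum_(ah : profm A i)
                             eta a ah * (d i a ah) `^ s = 0) /\
           (forall a : profm A i,
              prod_dist pbar i a - \sum_(ah : profm A i) eta a ah = 0) /\
           perp tau lam /\
           (forall ai : A i, perp (om ai) (pbar i ai)) /\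
         (forall a ah : profm A i,
              perp (eta a ah)
                (- xi a + \sum_(ai : A i) u i ai ah * pbar i ai
                 + lam * (d i a ah) `^ s)).
Proof.
move=> D E sig Vb HP1 HP2 HD1 HD2 HD3 HD4a HD4b HO.
set lam := x (inl (inr tt)).
set kap := x (inr (inr tt)).
pose xi a := x (inl (inl a)).
pose eta a ah := x (inr (inl (a, ah))).
pose S ai := \sum_a \sum_ah eta a ah * u i ai ah.
pose tau := E - \sum_a \sum_ah eta a ah * D a ah.
pose om ai := - kap - S ai.
pose slack a ah := - xi a + Vb ah + lam * D a ah.
have eta0 a ah : 0 <= eta a ah by rewrite -oppr_le0; apply: HD1.
have slack0 a ah : 0 <= slack a ah.
  have : xi a - lam * D a ah <= Vb ah := HP1 a ah.
  rewrite /slack; lra.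
have tau0 : 0 <= tau.
  have : \sum_a \sum_ah eta a ah * D a ah <= E := HD2.
  rewrite /tau; lra.
have lam0 : 0 <= lam by have : - lam <= 0 := HP2; lra.
have om0 ai : 0 <= om ai.
  have : kap + S ai <= 0 := HD3 ai.
  rewrite /om; lra.
have etar a : \sum_ah eta a ah = sig a.
  have : \sum_ah eta a ah <= sig a := HD4a a.
  have : - \sum_ah eta a ah <= - sig a := HD4b a.
  lra.
have [pb0 pb1] := pp i.
pose Z1 := \sum_a \sum_ah eta a ah * slack a ah.
pose Z2 := \sum_ai om ai * pbar i ai.
pose Z3 := tau * lam.
have Z1ge : 0 <= Z1 by apply: sumr_ge0 => a _; apply: sumr_ge0 => ah _; apply: mulr_ge0.
have Z2ge : 0 <= Z2 by apply: sumr_ge0 => ai _; apply: mulr_ge0.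
have Z3ge : 0 <= Z3 by apply: mulr_ge0.
have Zid : Z1 + Z2 + Z3 = - kap - \sum_a sig a * xi a + lam * E.
  have E1 : Z1 = - (\sum_a sig a * xi a) + \sum_ai pbar i ai * S ai +
                 lam * \sum_a \sum_ah eta a ah * D a ah.
    have T1 : \sum_a sig a * xi a = \sum_a \sum_ah eta a ah * xi a.
      by apply: eq_bigr => a _; rewrite -etar mulr_suml.
    have T2 : \sum_ai pbar i ai * S ai = \sum_a \sum_ah eta a ah * Vb ah.
      rewrite /S -triple exchange_big /=; apply: eq_bigr => ah _.
      by rewrite mulr_suml.
    rewrite T1 T2 mulr_sumr -sumrN -!big_split; apply: eq_bigr => a _ /=.
    rewrite mulr_sumr -sumrN -!big_split; apply: eq_bigr => ah _ /=.
    rewrite /slack; ring.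
  have E2 : Z2 = - kap - \sum_ai pbar i ai * S ai.
    rewrite /Z2 /om.
    have -> : \sum_ai (- kap - S ai) * pbar i ai =
              \sum_ai (- (kap * pbar i ai) - pbar i ai * S ai).
      by apply: eq_bigr => ai _; ring.
    by rewrite sumrB sumrN -mulr_sumr pb1 mulr1.
  rewrite E1 E2 /Z3 /tau; ring.
have HO' : - kap - \sum_a sig a * xi a + lam * E <= 0.
  have : - kap - \sum_a sig a * xi a + lam * E <= 0 := HO.
  done.
have Z10 : Z1 = 0 by lra.
have Z20 : Z2 = 0 by lra.
have Z30 : Z3 = 0 by lra.
have H1 a : \sum_ah eta a ah * slack a ah = 0.
  apply: (psumr_eq0P _ Z10) => // a0 _; apply: sumr_ge0 => ah0 _; exact: mulr_ge0.
have eslack a ah : eta a ah * slack a ah = 0.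
  apply: (psumr_eq0P _ (H1 a)) => // ah0 _; exact: mulr_ge0.
have ompb ai : om ai * pbar i ai = 0.
  by apply: (psumr_eq0P _ Z20) => // ai0 _; apply: mulr_ge0.
exists lam, xi, tau, om, kap, eta.
split; first by move=> ai; rewrite /om /S; ring.
split; first by rewrite /tau /E /D; ring.
split; first by move=> a; rewrite etar subrr.
split; first by split.
split; first by move=> ai; split.
move=> a ah; split => //; exact: (slack0 a ah).
Qed.

End Main2.

Lemma sum_unit (R : realType) (F : unit -> R) : \sum_(j : unit) F j = F tt.
Proof. by rewrite (bigD1 tt) //= big1 ?addr0 // => -[]; rewrite eqxx. Qed.

Lemma sum2_lin (R : realType) (P : finType) (F1 F2 F3 F4 : P -> P -> R) c :
  \sum_a \sum_b (- F1 a b + c * F2 a b + F3 a b + F4 a b) =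
  - (\sum_a \sum_b F1 a b) + c * (\sum_a \sum_b F2 a b) +
  \sum_a \sum_b F3 a b + \sum_a \sum_b F4 a b.
Proof.
under eq_bigr => a _ do rewrite !big_split /= sumrN -mulr_sumr.
by rewrite !big_split /= sumrN -mulr_sumr.
Qed.

Lemma coef_zero (R : realType) (P : finType) (C1 : P -> R) (C2 : R)
  (C3 : P -> P -> R) (C4 : R) :
  (forall (xi : P -> R) (lam : R) (eta : P -> P -> R) (kap : R),
     \sum_a xi a * C1 a + lam * C2 + \sum_a \sum_ah eta a ah * C3 a ah
     + kap * C4 = 0) ->
  (forall a, C1 a = 0) /\ C2 = 0 /\ (forall a ah, C3 a ah = 0) /\ C4 = 0.
Proof.
move=> H.
have Z1 (F : P -> R) : \sum_a 0 * F a = 0.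
  by rewrite big1 // => a _; rewrite mul0r.
have Z2 (F : P -> P -> R) : \sum_a \sum_ah 0 * F a ah = 0.
  by rewrite big1 // => a _; rewrite big1 // => ah _; rewrite mul0r.
split.
  move=> a0; have := H (fun a => if a == a0 then 1 else 0) 0 (fun _ _ => 0) 0.
  rewrite Z2 !mul0r !addr0 (bigD1 a0) //= eqxx mul1r big1 ?addr0 //.
  by move=> a /negbTE ->; rewrite mul0r.
split.
  by have := H (fun _ => 0) 1 (fun _ _ => 0) 0; rewrite Z1 Z2 mul1r mul0r add0r !addr0.
split.
  move=> a0 ah0.
  have E2 : \sum_a \sum_ah (if (a == a0) && (ah == ah0) then 1 else 0) * C3 a ah
      = C3 a0 ah0.
    rewrite (bigD1 a0) //= [X in _ + X]big1 ?addr0.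
      rewrite (bigD1 ah0) //= !eqxx /= mul1r [X in _ + X]big1 ?addr0 //.
      by move=> ah /negbTE ->; rewrite ?andbF /= mul0r.
    move=> a /negbTE Ha; rewrite big1 // => ah _.
    by rewrite Ha /= mul0r.
  have := H (fun _ => 0) 0 (fun a ah => if (a == a0) && (ah == ah0) then 1 else 0) 0.
  by rewrite Z1 E2 !mul0r !add0r !addr0.
by have := H (fun _ => 0) 0 (fun _ _ => 0) 1; rewrite Z1 Z2 mul1r mul0r !add0r.
Qed.

Section Main3.
Variables (R : realType) (N : nat) (A : 'I_N -> finType)
  (u : forall i, A i -> profm A i -> R)
  (d : forall i, profm A i -> profm A i -> R)
  (eps s : R) (pbar : forall i, A i -> R).
Hypotheses (eps0 : 0 <= eps) (s1 : 1 <= s) (dm : forall i, is_metric (d i))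
  (pp : forall i, is_prob (pbar i)).

Lemma dir12 (i : 'I_N) :
  (forall p : A i -> R, is_prob p ->
      robust_value (u i) (d i) s eps p (prod_dist pbar i)
      <= robust_value (u i) (d i) s eps (pbar i) (prod_dist pbar i)) ->
  exists (lam : R) (xi : profm A i -> R) (tau : R) (om : A i -> R) (kap : R)
            (eta : profm A i -> profm A i -> R),
       (forall ai : A i,
              om ai + kap + \sum_(a : profm A i) \sum_(ah : profm A i)
                             eta a ah * u i ai ah = 0) /\
           (- (eps `^ s) + tau + \sum_(a : profm A i) \sum_(ah : profm A i)
                             eta a ah * (d i a ah) `^ s = 0) /\
           (forall a : profm A i,
              prod_dist pbar i a - \sum_(ah : profm A i) eta a ah = 0) /\
           perp tau lam /\
           (forall ai : A i, perp (om ai) (pbar i ai)) /\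
         (forall a ah : profm A i,
              perp (eta a ah)
                (- xi a + \sum_(ai : A i) u i ai ah * pbar i ai
                 + lam * (d i a ah) `^ s)).
Proof.
move=> Hopt.
pose P := profm A i.
pose D (a ah : P) := (d i a ah) `^ s.
pose E := eps `^ s.
pose sig := prod_dist pbar i.
pose Vb (ah : P) := \sum_(ai : A i) u i ai ah * pbar i ai.
pose V := ((P + unit) + ((P * P) + unit))%type.
pose K := ((((P * P) + unit) + ((P * P) + unit)) + ((A i + P) + (P + unit)))%type.
pose f (k : K) (x : V -> R) : R :=
  match k with
  | inl (inl (inl p)) => x (inl (inl p.1)) - x (inl (inr tt)) * D p.1 p.2
  | inl (inl (inr _)) => - x (inl (inr tt))
  | inl (inr (inl p)) => - x (inr (inl p))
  | inl (inr (inr _)) => \sum_a \sum_ah x (inr (inl (a, ah))) * D a ah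
  | inr (inl (inl ai)) => x (inr (inr tt)) +
        \sum_a \sum_ah x (inr (inl (a, ah))) * u i ai ah
  | inr (inl (inr a)) => \sum_ah x (inr (inl (a, ah)))
  | inr (inr (inl a)) => - \sum_ah x (inr (inl (a, ah)))
  | inr (inr (inr _)) => - x (inr (inr tt)) - \sum_a sig a * x (inl (inl a))
        + x (inl (inr tt)) * E
  end.
pose b (k : K) : R :=
  match k with
  | inl (inl (inl p)) => Vb p.2
  | inl (inl (inr _)) => 0
  | inl (inr (inl _)) => 0
  | inl (inr (inr _)) => E
  | inr (inl (inl _)) => 0
  | inr (inl (inr a)) => sig a
  | inr (inr (inl a)) => - sig a
  | inr (inr (inr _)) => 0
  end.
have hD k x y : f k (fun v => x v + y v) = f k x + f k y.
  case: k => [[[p|[]]|[p|[]]]|[[ai|a]|[a|[]]]] /=.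
  - ring.
  - ring.
  - ring.
  - by rewrite sum2D.
  - rewrite sum2D; ring.
  - by rewrite big_split.
  - by rewrite big_split opprD.
  - rewrite sumlD; ring.
have hZ k c x : f k (fun v => c * x v) = c * f k x.
  case: k => [[[p|[]]|[p|[]]]|[[ai|a]|[a|[]]]] /=.
  - ring.
  - ring.
  - ring.
  - by rewrite sum2Z.
  - rewrite sum2Z; ring.
  - by rewrite mulr_sumr.
  - by rewrite mulrN mulr_sumr.
  - rewrite sumlZ; ring.
have [[x Hx]|Hinf] := pselect (exists x, forall k, f k x <= b k).
  apply: (@from_feasible R N A u d eps s pbar pp i x).
  - by move=> a ah; exact: (Hx (inl (inl (inl (a, ah))))).
  - exact: (Hx (inl (inl (inr tt)))).
  - by move=> a ah; exact: (Hx (inl (inr (inl (a, ah))))).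
  - exact: (Hx (inl (inr (inr tt)))).
  - by move=> ai; exact: (Hx (inr (inl (inl ai)))).
  - by move=> a; exact: (Hx (inr (inl (inr a)))).
  - by move=> a; exact: (Hx (inr (inr (inl a)))).
  - exact: (Hx (inr (inr (inr tt)))).
exfalso.
have [w [w0 [wid wb]]] := @farkasF R _ _ _ _ hD hZ Hinf.
pose mkx (xi : P -> R) (lam : R) (eta : P -> P -> R) (kap : R) : V -> R :=
  fun v => match v with
  | inl (inl a) => xi a | inl (inr _) => lam
  | inr (inl p) => eta p.1 p.2 | inr (inr _) => kap end.
pose ga a ah := w (inl (inl (inl (a, ah)))).
pose mu := w (inl (inl (inr tt))).
pose nu a ah := w (inl (inr (inl (a, ah)))).
pose t := w (inl (inr (inr tt))).
pose xx ai := w (inr (inl (inl ai))).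
pose rp a := w (inr (inl (inr a))).
pose rm a := w (inr (inr (inl a))).
pose z := w (inr (inr (inr tt))).
pose C1 a := \sum_ah ga a ah - z * sig a.
pose C2 := - (\sum_a \sum_ah ga a ah * D a ah) - mu + z * E.
pose C3 a ah := - nu a ah + t * D a ah + \sum_ai xx ai * u i ai ah + (rp a - rm a).
pose C4 := \sum_ai xx ai - z.
have key (xi : P -> R) (lam : R) (eta : P -> P -> R) (kap : R) :
  \sum_a xi a * C1 a + lam * C2 + \sum_a \sum_ah eta a ah * C3 a ah
     + kap * C4 = 0.
  have := wid (mkx xi lam eta kap).
  rewrite !big_sumType !sum_unit !sum_pair /= => H.
  apply: etrans _ H.
  rewrite /C1 /C2 /C3 /C4 /ga /mu /nu /t /xx /rp /rm /z.
  have T1 : \sum_a \sum_b w (inl (inl (inl (a, b)))) * (xi a - lam * D a b) =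
     \sum_a xi a * \sum_b w (inl (inl (inl (a, b)))) -
     lam * \sum_a \sum_b w (inl (inl (inl (a, b)))) * D a b.
    rewrite mulr_sumr -sumrB; apply: eq_bigr => a _.
    rewrite !mulr_sumr -sumrB; apply: eq_bigr => bb _; ring.
  have T3 : \sum_a \sum_b w (inl (inr (inl (a, b)))) * - eta a b =
     - \sum_a \sum_b eta a b * w (inl (inr (inl (a, b)))).
    rewrite -sumrN; apply: eq_bigr => a _.
    rewrite -sumrN; apply: eq_bigr => bb _; ring.
  have T5 : \sum_ai w (inr (inl (inl ai))) * (kap + \sum_a \sum_ah eta a ah * u i ai ah)
     = kap * \sum_ai w (inr (inl (inl ai))) +
       \sum_a \sum_ah eta a ah * \sum_ai w (inr (inl (inl ai))) * u i ai ah.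
    rewrite sumlD -sum1Z; congr (_ + _).
      by apply: eq_bigr => ai _; rewrite mulrC.
    transitivity (\sum_a \sum_ah \sum_ai w (inr (inl (inl ai))) * (eta a ah * u i ai ah)).
      under eq_bigr => ai _ do rewrite mulr_sumr.
      rewrite exchange_big /=; apply: eq_bigr => a _.
      under eq_bigr => ai _ do rewrite mulr_sumr.
      by rewrite exchange_big.
    apply: eq_bigr => a _; apply: eq_bigr => ah _; rewrite mulr_sumr.
    by apply: eq_bigr => ai _; ring.
  have T7 : \sum_a w (inr (inr (inl a))) * - \sum_ah eta a ah =
     - \sum_a w (inr (inr (inl a))) * \sum_ah eta a ah.
    by rewrite -sumrN; apply: eq_bigr => a _; rewrite mulrN.
  have G1 : \sum_a xi a * (\sum_ah w (inl (inl (inl (a, ah)))) -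
            w (inr (inr (inr tt))) * sig a) =
     \sum_a xi a * \sum_b w (inl (inl (inl (a, b)))) -
     w (inr (inr (inr tt))) * \sum_a sig a * xi a.
    rewrite mulr_sumr -sumrB; apply: eq_bigr => a _; ring.
  have G3 : \sum_a \sum_ah eta a ah * (- w (inl (inr (inl (a, ah)))) +
       w (inl (inr (inr tt))) * D a ah +
       \sum_ai w (inr (inl (inl ai))) * u i ai ah +
       (w (inr (inl (inr a))) - w (inr (inr (inl a))))) =
     - (\sum_a \sum_b eta a b * w (inl (inr (inl (a, b))))) +
     w (inl (inr (inr tt))) * (\sum_a \sum_ah eta a ah * D a ah) +
     \sum_a \sum_ah eta a ah * \sum_ai w (inr (inl (inl ai))) * u i ai ah +
     (\sum_a w (inr (inl (inr a))) * \sum_ah eta a ah -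
      \sum_a w (inr (inr (inl a))) * \sum_ah eta a ah).
    have step : \sum_a \sum_ah eta a ah * (- w (inl (inr (inl (a, ah)))) +
       w (inl (inr (inr tt))) * D a ah +
       \sum_ai w (inr (inl (inl ai))) * u i ai ah +
       (w (inr (inl (inr a))) - w (inr (inr (inl a))))) =
      \sum_a \sum_ah (- (eta a ah * w (inl (inr (inl (a, ah))))) +
       w (inl (inr (inr tt))) * (eta a ah * D a ah) +
       eta a ah * \sum_ai w (inr (inl (inl ai))) * u i ai ah +
       eta a ah * (w (inr (inl (inr a))) - w (inr (inr (inl a))))).
      by apply: eq_bigr => a _; apply: eq_bigr => ah _; ring.
    have S4 : \sum_a \sum_ah eta a ah * (w (inr (inl (inr a))) - w (inr (inr (inl a)))) =
      \sum_a w (inr (inl (inr a))) * \sum_ah eta a ah -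
      \sum_a w (inr (inr (inl a))) * \sum_ah eta a ah.
      by rewrite -sumrB; apply: eq_bigr => a _; rewrite -mulr_suml; ring.
    by rewrite step sum2_lin S4.
  rewrite T1 T3 T5 T7 G1 G3; ring.
have [hC1 [hC2 [hC3 hC4]]] := @coef_zero R P C1 C2 C3 C4 key.
have Hb : \sum_a \sum_ah ga a ah * Vb ah + t * E + \sum_a sig a * (rp a - rm a) < 0.
  move: wb; rewrite !big_sumType !sum_unit !sum_pair /= => H.
  have Z1 : \sum_a \sum_b w (inl (inr (inl (a, b)))) * 0 = 0.
    by rewrite big1 // => a _; rewrite big1 // => bb _; rewrite mulr0.
  have Z2 : \sum_ai w (inr (inl (inl ai))) * 0 = 0.
    by rewrite big1 // => ai _; rewrite mulr0.
  have Z3 : \sum_a w (inr (inr (inl a))) * - sig a =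
            - \sum_a w (inr (inr (inl a))) * sig a.
    by rewrite -sumrN; apply: eq_bigr => a _; rewrite mulrN.
  have Z4 : \sum_a sig a * (rp a - rm a) =
     \sum_a w (inr (inl (inr a))) * sig a - \sum_a w (inr (inr (inl a))) * sig a.
    by rewrite -sumrB; apply: eq_bigr => a _; rewrite /rp /rm; ring.
  rewrite Z4 /ga /t; move: H; rewrite Z1 Z2 Z3 !mulr0; lra.
have w0' k : 0 <= w k := w0 k.
have ga0 a ah : 0 <= ga a ah := w0 _.
have nu0 a ah : 0 <= nu a ah := w0 _.
have t0 : 0 <= t := w0 _.
have xx0 ai : 0 <= xx ai := w0 _.
have z0 : 0 <= z := w0 _.
have E0 : 0 <= E by rewrite /E powR_ge0.
have sp : is_prob sig := @prod_dist_prob R N A pbar i pp.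
have [sig0 sig1] := sp.
have C3' a ah : 0 <= (rp a - rm a) + t * D a ah + \sum_ai xx ai * u i ai ah.
  have := hC3 a ah; rewrite /C3 => H.
  have := nu0 a ah; lra.
have [zE|zN] := eqVneq z 0.
  have Sxx : \sum_ai xx ai = 0 by have := hC4; rewrite /C4 zE subr0.
  have xxE ai : xx ai = 0.
    by apply: (psumr_eq0P _ Sxx) => // ai0 _; apply: xx0.
  have gaE a ah : ga a ah = 0.
    have Sga : \sum_ah ga a ah = 0.
      by have := hC1 a; rewrite /C1 zE mul0r subr0.
    by apply: (psumr_eq0P _ Sga) => // ah0 _; apply: ga0.
  have r0 a : 0 <= rp a - rm a.
    have := C3' a a.
    have -> : D a a = 0.
      rewrite /D; case: (dm i) => _ dxx _ _.
      rewrite (proj2 (dxx a a) erefl) powR0 //.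
      by apply/negP => /eqP s0; move: s1; rewrite s0 ler10.
    rewrite big1 ?mulr0 ?addr0 // => ai _; by rewrite xxE mul0r.
  have S1 : \sum_a \sum_ah ga a ah * Vb ah = 0.
    by rewrite big1 // => a _; rewrite big1 // => ah _; rewrite gaE mul0r.
  have S2 : 0 <= \sum_a sig a * (rp a - rm a).
    by apply: sumr_ge0 => a _; apply: mulr_ge0.
  have S3 : 0 <= t * E by apply: mulr_ge0.
  lra.
have zpos : 0 < z by rewrite lt_neqAle eq_sym zN.
pose pz ai := xx ai / z.
have pzp : is_prob pz.
  split; first by move=> ai; rewrite /pz divr_ge0.
  rewrite /pz -mulr_suml.
  have -> : \sum_ai xx ai = z by have := hC4; rewrite /C4 => /eqP; rewrite subr_eq0 => /eqP.
  by rewrite divff.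
pose g a ah := ga a ah / z.
have g0 a ah : 0 <= g a ah by rewrite /g divr_ge0.
have grow a : \sum_ah g a ah = sig a.
  rewrite /g -mulr_suml.
  have -> : \sum_ah ga a ah = z * sig a.
    by have := hC1 a; rewrite /C1 => /eqP; rewrite subr_eq0 => /eqP.
  by rewrite mulrC mulKf.
have gcost : \sum_a \sum_ah (d i a ah) `^ s * g a ah <= eps `^ s.
  have -> : \sum_a \sum_ah (d i a ah) `^ s * g a ah =
            (\sum_a \sum_ah ga a ah * D a ah) / z.
    rewrite mulr_suml; apply: eq_bigr => a _; rewrite mulr_suml.
    by apply: eq_bigr => ah _; rewrite /g /D; ring.
  rewrite ler_pdivrMr // mulrC.
  have := hC2; rewrite /C2 => H.
  have := w0 (inl (inl (inr tt))); rewrite -/mu -/E => Hmu.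
  lra.
have Hq : ambiguity (d i) s eps sig (fun ah => \sum_a g a ah).
  by apply: amb_of_coupling.
have Hub : robust_value (u i) (d i) s eps (pbar i) sig <=
           Upay (u i) (pbar i) (fun ah => \sum_a g a ah).
  by apply: rv_le.
have Uval : Upay (u i) (pbar i) (fun ah => \sum_a g a ah) =
            (\sum_a \sum_ah ga a ah * Vb ah) / z.
  rewrite Upay_eq mulr_suml.
  under [RHS]eq_bigr => a _ do rewrite mulr_suml.
  rewrite [RHS]exchange_big /=; apply: eq_bigr => ah _.
  rewrite mulr_suml; apply: eq_bigr => a _; rewrite /g /Vb; ring.
pose xi' a := - (rp a - rm a) / z.
pose lam' := t / z.
have lam'0 : 0 <= lam' by rewrite /lam' divr_ge0.
have Hdual a ah : xi' a - lam' * (d i a ah) `^ s <= \sum_ai u i ai ah * pz ai.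
  have -> : \sum_ai u i ai ah * pz ai = (\sum_ai xx ai * u i ai ah) / z.
    rewrite mulr_suml; apply: eq_bigr => ai _; rewrite /pz; ring.
  rewrite -subr_le0.
  have -> : xi' a - lam' * (d i a ah) `^ s - (\sum_ai xx ai * u i ai ah) / z =
      - (((rp a - rm a) + t * D a ah + \sum_ai xx ai * u i ai ah) / z).
    rewrite /xi' /lam' /D; ring.
  by rewrite oppr_le0 divr_ge0 // C3'.
have Hlow : \sum_a sig a * xi' a - lam' * eps `^ s <=
            robust_value (u i) (d i) s eps pz sig.
  by apply: rv_ge => // q Hq'; apply: weak_dual.
have Hopt' := Hopt pz pzp.
have Hval : \sum_a sig a * xi' a - lam' * eps `^ s =
    (- (\sum_a sig a * (rp a - rm a)) - t * E) / z.
  have -> : \sum_a sig a * xi' a = - (\sum_a sig a * (rp a - rm a)) / z.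
    rewrite mulNr mulr_suml -sumrN; apply: eq_bigr => a _; rewrite /xi'; ring.
  rewrite /lam' /E; ring.
have Hfin : (- (\sum_a sig a * (rp a - rm a)) - t * E) / z <=
            (\sum_a \sum_ah ga a ah * Vb ah) / z.
  by rewrite -Hval -Uval; apply: le_trans Hub; apply: le_trans Hopt'.
move: Hfin; rewrite ler_pM2r ?invr_gt0 // => Hfin.
lra.
Qed.

End Main3.

Theorem proposition2 (R : realType) (N : nat) (A : 'I_N -> finType)
  (u : forall i, A i -> profm A i -> R)
  (d : forall i, profm A i -> profm A i -> R)
  (eps s : R) (pbar : forall i, A i -> R) :
  0 <= eps -> 1 <= s ->
  (forall i, is_metric (d i)) ->
  (forall i, is_prob (pbar i)) ->
  SRE u d s eps pbar <->
  (forall i : 'I_N,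
     exists (lam : R) (xi : profm A i -> R) (tau : R) (om : A i -> R) (kap : R)
            (eta : profm A i -> profm A i -> R),
       (forall ai : A i,
              om ai + kap + \sum_(a : profm A i) \sum_(ah : profm A i)
                             eta a ah * u i ai ah = 0) /\
           (- (eps `^ s) + tau + \sum_(a : profm A i) \sum_(ah : profm A i)
                             eta a ah * (d i a ah) `^ s = 0) /\
           (forall a : profm A i,
              prod_dist pbar i a - \sum_(ah : profm A i) eta a ah = 0) /\
           perp tau lam /\
           (forall ai : A i, perp (om ai) (pbar i ai)) /\
         (forall a ah : profm A i,
              perp (eta a ah)
                (- xi a + \sum_(ai : A i) u i ai ah * pbar i ai
                 + lam * (d i a ah) `^ s))).
Proof.
move=> eps0 s1 dm pp; split.
  move=> Hsre i; apply: dir12 => //; by case: (Hsre i).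
move=> H i; apply: dir21 => //; exact: H.
Qed.
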